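(* Let $\mathcal H$ be a real Hilbert space, $T:\mathcal H\rightrightarrows\mathcal H$ maximal monotone, and $D:\mathcal H\to\mathcal H$ monotone and continuously differentiable with Lipschitz continuous derivative $D'$. For $u\in\mathcal H$ let $D_{(u)}(x):=D(u)+D'(u)(x-u)$. Let $(s^k)$ and $(u^k)$ be bounded sequences in $\mathcal H$ and $(\rho^k)$ a bounded sequence in $(0,\infty)$. Then the sequence $x^k:=J_{\rho^k(T+D_{(u^k)})}(s^k)$, $k\ge0$, is bounded.
   Context: For a maximal monotone operator $S$, $J_S:=(S+I)^{-1}$ denotes its resolvent. *)

(* Defs.v *)
From HB Require Import structures.
From mathcomp Require Import all_boot all_order all_algebra.
From mathcomp Require Import all_classical all_reals.
From mathcomp Require Import topology normedtype derive.
Set Implicit Arguments. Unset Strict Implicit. Unset Printing Implicit Defensive.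
Import Order.TTheory GRing.Theory Num.Theory.
Import numFieldNormedType.Exports.
Local Open Scope ring_scope.
Local Open Scope classical_set_scope.

Definition is_inner_product (R : realType) (H : normedModType R)
  (ip : H -> H -> R) : Prop :=
  [/\ (forall x y, ip x y = ip y x),
      (forall x y z, ip (x + y) z = ip x z + ip y z),
      (forall (a : R) x y, ip (a *: x) y = a * ip x y) &
      (forall x, ip x x = `|x| ^+ 2)].

Definition monotone_op (R : realType) (H : normedModType R)
  (ip : H -> H -> R) (T : H -> set H) : Prop :=
  forall x y u v, T x u -> T y v -> 0 <= ip (x - y) (u - v).

Definition maximal_monotone (R : realType) (H : normedModType R)
  (ip : H -> H -> R) (T : H -> set H) : Prop :=
  monotone_op ip T /\
  forall T' : H -> set H, monotone_op ip T' ->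
    (forall x, T x `<=` T' x) -> T' = T.

Definition monotone_map (R : realType) (H : normedModType R)
  (ip : H -> H -> R) (D : H -> H) : Prop :=
  forall x y, 0 <= ip (x - y) (D x - D y).

Definition op_add (R : realType) (H : normedModType R)
  (T : H -> set H) (F : H -> H) : H -> set H :=
  fun x => [set t + F x | t in T x].
Definition op_scale (R : realType) (H : normedModType R)
  (r : R) (S : H -> set H) : H -> set H :=
  fun x => [set r *: y | y in S x].

(* Resolvent J_S := (S + I)^{-1}, as a set-valued map. *)
Definition resolvent (R : realType) (H : normedModType R)
  (S : H -> set H) : H -> set H :=
  fun y => [set x | S x (y - x)].

Definition linearization (R : realType) (H : normedModType R)
  (D : H -> H) (u : H) : H -> H :=
  fun x => D u + 'd D u (x - u).

Definition bounded_seq (R : realType) (H : normedModType R)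
  (s : nat -> H) : Prop := exists M : R, forall k, `|s k| <= M.

(* Main.v *)
Require Import Defs.
From HB Require Import structures.
From mathcomp Require Import all_boot all_order all_algebra.
From mathcomp Require Import all_classical all_reals.
From mathcomp Require Import topology normedtype derive.
From mathcomp Require Import ring lra.
Import Order.TTheory GRing.Theory Num.Theory.
Import numFieldNormedType.Exports.
Local Open Scope ring_scope.
Local Open Scope classical_set_scope.

Lemma ip_props (R : realType) (H : normedModType R) (ip : H -> H -> R) :
  is_inner_product ip ->
  [/\ forall x y z, ip x (y + z) = ip x y + ip x z,
      forall x (a : R) y, ip x (a *: y) = a * ip x y,
      forall x y, ip (- x) y = - ip x y,
      forall x y, ip x (- y) = - ip x y &
      forall x y z, ip (x - y) z = ip x z - ip y z].
Proof.
case=> sym addl scl nrm.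
have neg : forall x y, ip (- x) y = - ip x y.
  by move=> x y; rewrite -scaleN1r scl mulN1r.
split.
- by move=> x y z; rewrite sym addl !(sym x).
- by move=> x a y; rewrite sym scl sym.
- exact: neg.
- by move=> x y; rewrite sym neg sym.
- by move=> x y z; rewrite addl neg.
Qed.

Lemma ip_CS (R : realType) (H : normedModType R) (ip : H -> H -> R) :
  is_inner_product ip -> forall x y, ip x y <= `|x| * `|y|.
Proof.
move=> hip; have [sym addl scl nrm] := hip.
have [addr sclr negl negr subl] := @ip_props _ _ _ hip.
move=> x y.
have key : forall l : R, 0 <= l ^+ 2 * `|x| ^+ 2 - 2 * l * ip x y + `|y| ^+ 2.
  move=> l; have := nrm (l *: x - y).
  rewrite subl !addr !scl !sclr !negr !nrm (sym y x) => e.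
  have : 0 <= `|l *: x - y| ^+ 2 by rewrite exprn_ge0.
  rewrite -e; lra.
have [x0|xn0] := eqVneq x 0.
  have -> : ip x y = 0 by rewrite x0 -(scale0r (0:H)) scl mul0r.
  by rewrite x0 normr0 mul0r.
have nx : 0 < `|x| by rewrite normr_gt0.
have := key (`|y| / `|x|).
have e : `|y| / `|x| * `|x| = `|y| by rewrite divfK // gt_eqF.
set l := `|y| / `|x|.
have hy := normr_ge0 y.
move=> k.
have : l * ip x y <= `|y| ^+ 2.
  have : l ^+ 2 * `|x| ^+ 2 = `|y| ^+ 2 by rewrite -exprMn e.
  lra.
move=> h2.
have [y0|yn0] := eqVneq y 0.
  have -> : ip x y = 0 by rewrite y0 -(scale0r (0:H)) sclr mul0r.
  by rewrite y0 normr0 mulr0.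
have ny : 0 < `|y| by rewrite normr_gt0.
have : `|x| * (l * ip x y) <= `|x| * `|y| ^+ 2 by rewrite ler_wpM2l // ltW.
have -> : `|x| * (l * ip x y) = `|y| * ip x y by rewrite -[in RHS]e mulrA (mulrC `|x|).
move=> h3.
have : `|y| * ip x y <= `|y| * (`|x| * `|y|) by lra.
by rewrite ler_pM2l.
Qed.
Lemma ip_deriv (R : realType) (H : normedModType R) (ip : H -> H -> R)
  (D : H -> H) (a b w : H) (t : R) :
  (forall x y z, ip (x + y) z = ip x z + ip y z) ->
  (forall (k : R) x y, ip (k *: x) y = k * ip x y) ->
  (forall x, ip x w <= `|x| * `|w|) -> (forall x, - ip x w <= `|x| * `|w|) ->
  differentiable D (a + t *: b) ->
  is_derive t 1 (fun s => ip (D (a + s *: b)) w) (ip ('d D (a + t *: b) b) w).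
Proof.
move=> addl scl cs1 cs2 dD.
pose f := fun x => ip x w.
have flin : linear f by move=> k x y; rewrite /f addl scl.
pose fL : {linear H -> R} := HB.pack f (GRing.isLinear.Build _ _ _ _ _ flin).
have fc : continuous fL.
  apply/bounded_linear_continuous/bounded_funP => r.
  exists (`|r| * `|w|) => x xr /=.
  rewrite ler_norml; apply/andP; split.
    rewrite lerNl; apply: le_trans (cs2 x) _; apply: ler_wpM2r => //.
    exact: le_trans xr (ler_norm r).
  apply: le_trans (cs1 x) _; apply: ler_wpM2r => //.
  exact: le_trans xr (ler_norm r).
have df : forall y, is_diff y fL fL.
  move=> y; apply: DiffDef; first exact: linear_differentiable.
  exact: diff_lin.
have dg : is_diff t (cst a + ( *:%R^~ b)) (0 + ( *:%R^~ b)) by exact: is_diffD.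
have dD' : is_diff ((cst a + ( *:%R^~ b)) t) D ('d D (a + t *: b)).
  by apply: DiffDef.
have dc := is_diff_comp dg dD'.
have dc2 := is_diff_comp dc (df _).
have -> : (fun s => ip (D (a + s *: b)) w) = fL \o (D \o (cst a + ( *:%R^~ b))).
  by apply: funext => s.
apply: DeriveDef; first exact: diff_derivable.
rewrite deriveE // diff_val /=.
by rewrite add0r scale1r.
Qed.

Lemma ip_mvt (R : realType) (H : normedModType R) (ip : H -> H -> R)
  (D : H -> H) (a b w : H) (t : R) :
  is_inner_product ip -> (forall y, differentiable D y) -> 0 < t ->
  exists2 c, c \in `]0, t[%R &
    ip (D (a + t *: b)) w - ip (D (a + 0 *: b)) w = ip ('d D (a + c *: b) b) w * (t - 0).
Proof.
move=> hip dD t0.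
have [sym addl scl nrm] := hip.
have [addr sclr negl negr subl] := @ip_props _ _ _ hip.
have cs1 : forall x, ip x w <= `|x| * `|w| by move=> x; exact: (@ip_CS _ _ _ hip).
have cs2 : forall x, - ip x w <= `|x| * `|w|.
  by move=> x; rewrite -negl -(normrN x); exact: (@ip_CS _ _ _ hip).
have der := fun s => @ip_deriv R H ip D a b w s addl scl cs1 cs2 (dD _).
have hc : {within `[0, t], continuous (fun s => ip (D (a + s *: b)) w)}.
  apply: continuous_subspaceT => s.
  apply: differentiable_continuous; apply/derivable1_diffP.
  by have [] := der s.
exact: (@MVT R (fun s => ip (D (a + s *: b)) w) (fun s => ip ('d D (a + s *: b) b) w) 0 t t0 (fun s _ => der s) hc).
Qed.

Lemma dmon (R : realType) (H : normedModType R) (ip : H -> H -> R)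
  (D : H -> H) (L : R) :
  is_inner_product ip -> monotone_map ip D -> (forall y, differentiable D y) ->
  0 <= L ->
  (forall y z w, `|'d D y w - 'd D z w| <= L * `|y - z| * `|w|) ->
  forall z w, 0 <= ip ('d D z w) w.
Proof.
move=> hip mon dD L0 Lip z w.
have [sym addl scl nrm] := hip.
have [addr sclr negl negr subl] := @ip_props _ _ _ hip.
set c := ip ('d D z w) w.
have nw := normr_ge0 w.
set K := L * `|w| ^+ 3.
have K0 : 0 <= K by rewrite /K mulr_ge0 // exprn_ge0.
suff h : forall t, 0 < t -> - c <= t * K.
  rewrite -oppr_le0; apply/ler_addgt0Pr => e e0; rewrite add0r.
  have := h (e / (K + 1)); rewrite divr_gt0 //; last by lra.
  move=> /(_ isT) /le_trans; apply.
  rewrite mulrAC ler_pdivrMr; last by lra.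
  rewrite mulrDr mulr1; nra.
move=> t t0.
have [c' /[!in_itv] /= /andP [c0 ct] e] := @ip_mvt R H ip D z w w t hip dD t0.
have hm := mon (z + t *: w) z.
rewrite addrAC subrr add0r scl (sym w) subl in hm.
rewrite scale0r addr0 subr0 in e.
rewrite e in hm.
have pos : 0 <= ip ('d D (z + c' *: w) w) w.
  by move: hm; rewrite pmulr_rge0 // pmulr_lge0.
have := @ip_CS _ _ _ hip ('d D (z + c' *: w) w - 'd D z w) w.
rewrite subl -/c => h1.
have := Lip (z + c' *: w) z w.
rewrite addrAC subrr add0r normrZ gtr0_norm // => h2.
have h3 := ler_wpM2r nw h2.
have h4 : K * c' <= K * t by rewrite ler_wpM2l // ltW.
have e5 : L * (c' * `|w|) * `|w| * `|w| = K * c' by rewrite /K; ring.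
rewrite e5 in h3.
rewrite mulrC; lra.
Qed.

Lemma taylor (R : realType) (H : normedModType R) (ip : H -> H -> R)
  (D : H -> H) (L : R) :
  is_inner_product ip -> (forall y, differentiable D y) ->
  0 <= L ->
  (forall y z w, `|'d D y w - 'd D z w| <= L * `|y - z| * `|w|) ->
  forall u y w, ip (D y - D u - 'd D u (y - u)) w <= L * `|y - u| ^+ 2 * `|w|.
Proof.
move=> hip dD L0 Lip u y w.
have [sym addl scl nrm] := hip.
have [addr sclr negl negr subl] := @ip_props _ _ _ hip.
have [c /[!in_itv] /= /andP [c0 c1] e] := @ip_mvt R H ip D u (y - u) w 1 hip dD ltr01.
rewrite scale1r (addrC u) subrK scale0r addr0 subr0 mulr1 in e.
rewrite !subl e -subl.
have h1 := @ip_CS _ _ _ hip ('d D (u + c *: (y - u)) (y - u) - 'd D u (y - u)) w.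
have h2 := Lip (u + c *: (y - u)) u (y - u).
rewrite addrAC subrr add0r normrZ gtr0_norm // in h2.
have nw := normr_ge0 w.
have ny := normr_ge0 (y - u).
apply: le_trans h1 _.
have h3 := ler_wpM2r nw h2.
apply: le_trans h3 _.
have P0 : 0 <= L * `|y - u| ^+ 2 * `|w| by rewrite !mulr_ge0 // exprn_ge0.
have := ler_wpM2l P0 (ltW c1).
have -> : L * (c * `|y - u|) * `|y - u| * `|w| = L * `|y - u| ^+ 2 * `|w| * c by ring.
by rewrite mulr1.
Qed.

Theorem lemma2p4 (R : realType) (H : completeNormedModType R)
  (ip : H -> H -> R) (T : H -> set H) (D : H -> H)
  (s u : nat -> H) (rho : nat -> R) (x : nat -> H) :
  is_inner_product ip ->
  maximal_monotone ip T ->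
  monotone_map ip D ->
  (forall y, differentiable D y) ->
  (exists L : R, forall y z w,
      `|'d D y w - 'd D z w| <= L * `|y - z| * `|w|) ->
  bounded_seq s -> bounded_seq u ->
  (forall k, 0 < rho k) -> (exists M : R, forall k, rho k <= M) ->
  (forall k, resolvent (op_scale (rho k) (op_add T (linearization D (u k)))) (s k) (x k)) ->
  bounded_seq x.
Proof.
move=> hip [Tmon Tmax] Dmon dD [L0 Lip0] [Ms hs] [Mu hu] rpos [Mr hr] hx.
have [sym addl scl nrm] := hip.
have [addr sclr negl negr subl] := @ip_props _ _ _ hip.
set L := `|L0|.
have L0p : 0 <= L by exact: normr_ge0.
have Lip : forall y z w, `|'d D y w - 'd D z w| <= L * `|y - z| * `|w|.
  move=> y z w; apply: le_trans (Lip0 y z w) _.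
  by apply: ler_wpM2r => //; apply: ler_wpM2r => //; exact: ler_norm.
have [y0 [v0 Tyv]] : exists y0 v0, T y0 v0.
  case: (pselect (exists y0 v0, T y0 v0)) => // hn; exfalso.
  pose T' := fun x : H => [set v : H | x = 0 /\ v = 0].
  have m' : monotone_op ip T'.
    move=> a b c d [-> ->] [-> ->].
    by rewrite subrr nrm normr0 expr2 mulr0.
  have sub : forall z, T z `<=` T' z.
    by move=> z v Tzv; exfalso; apply: hn; exists z, v.
  have eT := Tmax T' m' sub.
  have T00 : T 0 0 by rewrite -eT.
  by apply: hn; exists 0, 0.
have Mu0 : 0 <= Mu by apply: le_trans (hu 0%N); exact: normr_ge0.
have Mr0 : 0 <= Mr by apply: le_trans (hr 0%N); exact: ltW.
set W' := L * (`|y0| + Mu) ^+ 2 + `|D y0| + `|v0|.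
set B := Ms + `|y0| + Mr * W'.
exists (B + `|y0|) => k.
have [yy [t Tt eyy] erho] := hx k.
rewrite -eyy /linearization in erho.
set a := x k - y0.
set d := 'd D (u k).
have hm := Tmon (x k) y0 t v0 Tt Tyv.
rewrite -/a sym subl in hm.
have dm := @dmon R H ip D L hip Dmon dD L0p Lip (u k) a.
rewrite -/d in dm.
have ty := @taylor R H ip D L hip dD L0p Lip (u k) y0 a.
rewrite -/d !subl in ty.
have exu : x k - u k = a + (y0 - u k) by rewrite /a addrA subrK.
have ea : ip (rho k *: (t + (D (u k) + d (x k - u k)))) a = ip (s k - x k) a by rewrite erho.
rewrite exu (linearD d) !scalerDr !addl !scl negl in ea.
have na2 : `|a| ^+ 2 = ip (x k) a - ip y0 a by rewrite -nrm /a subl.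
have cs1 := @ip_CS _ _ _ hip (s k - y0) a.
rewrite subl in cs1.
have cs2 : - ip (D y0) a <= `|D y0| * `|a|.
  by rewrite -negl -(normrN (D y0)); exact: (@ip_CS _ _ _ hip).
have cs3 : - ip v0 a <= `|v0| * `|a|.
  by rewrite -negl -(normrN v0); exact: (@ip_CS _ _ _ hip).
have rk0 := ltW (rpos k).
set rk := rho k in ea rk0 *.
have na0 := normr_ge0 a.
set q := `|y0 - u k|.
have h1 : 0 <= rk * (ip t a - ip v0 a) by apply: mulr_ge0.
have h2 : 0 <= rk * ip (d a) a by apply: mulr_ge0.
have h3 : rk * (ip (D y0) a - ip (D (u k)) a - ip (d (y0 - u k)) a) <= rk * (L * q ^+ 2 * `|a|)
  by apply: ler_wpM2l.
have h4 : rk * (- ip (D y0) a) <= rk * (`|D y0| * `|a|) by apply: ler_wpM2l.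
have h5 : rk * (- ip v0 a) <= rk * (`|v0| * `|a|) by apply: ler_wpM2l.
have key : `|a| ^+ 2 <= `|a| * (`|s k - y0| + rk * (L * q ^+ 2 + `|D y0| + `|v0|)).
  rewrite na2. nra.
have q0 : 0 <= q by exact: normr_ge0.
have qb : q <= `|y0| + Mu.
  apply: le_trans (ler_normB _ _) _; apply: lerD => //.
have sb : `|s k - y0| <= Ms + `|y0|.
  apply: le_trans (ler_normB _ _) _; apply: lerD => //.
have Wb : L * q ^+ 2 + `|D y0| + `|v0| <= W'.
  rewrite /W' lerD2r lerD2r ler_wpM2l //.
  have ny0 := normr_ge0 y0; nra.
have W0 : 0 <= L * q ^+ 2 + `|D y0| + `|v0|.
  by rewrite !addr_ge0 // mulr_ge0 // exprn_ge0.
have rb : rk * (L * q ^+ 2 + `|D y0| + `|v0|) <= Mr * W'.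
  exact: (ler_pM rk0 W0 (hr k) Wb).
have Bk : `|s k - y0| + rk * (L * q ^+ 2 + `|D y0| + `|v0|) <= B.
  exact: lerD sb rb.
set bk := `|s k - y0| + rk * (L * q ^+ 2 + `|D y0| + `|v0|) in key Bk.
have naB : `|a| <= B.
  have k2 : `|a| ^+ 2 <= `|a| * B.
    apply: le_trans key _; exact: ler_wpM2l.
  have [//|lt] := leP `|a| B.
  have B0 : 0 <= B.
    apply: le_trans Bk; rewrite /bk addr_ge0 // mulr_ge0 //.
  have : `|a| * B < `|a| * `|a| by rewrite ltr_pM2l // (le_lt_trans B0 lt).
  rewrite -expr2; lra.
have -> : x k = a + y0 by rewrite /a subrK.
apply: le_trans (ler_normD _ _) _.
by rewrite lerD2r.
Qed.
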